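(* Let $h$ be the state on $U_n^{nc}$ defined below. For all $r$ (even) and all $1\le i_1,j_1,\dots,i_r,j_r\le n$, $$h(u_{i_1j_1}u^*_{i_2j_2}u_{i_3j_3}u^*_{i_4j_4}\cdots u_{i_{r-1}j_{r-1}}u^*_{i_rj_r})=\tfrac1n\,\delta_{i_1i_2}\delta_{j_2j_3}\delta_{i_3i_4}\cdots\delta_{i_{r-1}i_r}\delta_{j_rj_1},$$ $$h(u^*_{i_1j_1}u_{i_2j_2}u^*_{i_3j_3}u_{i_4j_4}\cdots u^*_{i_{r-1}j_{r-1}}u_{i_rj_r})=\tfrac1n\,\delta_{j_1j_2}\delta_{i_2i_3}\delta_{j_3j_4}\cdots\delta_{j_{r-1}j_r}\delta_{i_ri_1}.$$
   Context: $U_n^{nc}$ is the universal unital $*$-algebra generated by $u_{ij}$ ($1\le i,j\le n$) with $\sum_ku_{ki}^*u_{kj}=\delta_{ij}=\sum_ku_{ik}u_{jk}^*$. Let $H=\ell^2(\mathbb Z)\otimes\bigotimes_{k\in\mathbb Z}M_n(\mathbb C)$, where $M_n(\mathbb C)$ is a Hilbert space with inner product $\langle A,B\rangle=\mathrm{Tr}(A^*B)/n$ and the infinite tensor product is taken with respect to the reference vector $I_n$ (only finitely many factors differ from $I_n$); $(\delta_k)$ is the standard basis of $\ell^2(\mathbb Z)$ and $E_{ij}$ the matrix units. Define bounded operators $U_{ij}$ on $H$ by $U_{ij}(\delta_k\otimes(\cdots\otimes M_{k-1}\otimes M_k\otimes M_{k+1}\otimes\cdots))=\delta_{k+1}\otimes(\cdots\otimes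 M_{k-1}\otimes E_{ji}M_k\otimes M_{k+1}\otimes\cdots)$ (the factor at position $k$ is multiplied), so that $U_{ij}^*(\delta_k\otimes(\cdots\otimes M_{k-1}\otimes\cdots))=\delta_{k-1}\otimes(\cdots\otimes E_{ij}M_{k-1}\otimes M_k\otimes\cdots)$. These satisfy the defining relations of $U_n^{nc}$, so there is a unital $*$-homomorphism $j:U_n^{nc}\to B(H)$, $j(u_{ij})=U_{ij}$. With $\Omega=\delta_0\otimes\bigotimes_kI_n$, define $h(a)=\langle\Omega,j(a)\Omega\rangle$. *)

(* Defs.v *)
From HB Require Import structures.
From mathcomp Require Import all_boot all_order all_algebra all_field.
Set Implicit Arguments. Unset Strict Implicit. Unset Printing Implicit Defensive.
Import Order.TTheory GRing.Theory Num.Theory.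
Local Open Scope ring_scope.

(* Elementary tensors  delta_k (x) (tensor_m M_m)  in
   H = l^2(Z) (x) bigotimes_{m in Z} M_n(C)  (reference vector I_n):
   only the factors indexed by et_supp may differ from I_n. *)
Record etensor (n : nat) := ETensor {
  et_pos : int;
  et_fac : int -> 'M[algC]_n;
  et_supp : seq int;
  et_suppP : forall m, m \notin et_supp -> et_fac m = 1%:M }.

Definition mx_inner (n : nat) (A B : 'M[algC]_n) : algC :=
  \tr ((map_mx Num.conj A)^T *m B) / n%:R.

(* inner product of elementary tensors (linear in the second variable);
   factors outside the supports are I_n, with <I_n, I_n> = 1 *)
Definition et_inner (n : nat) (s t : etensor n) : algC :=
  (et_pos s == et_pos t)%:R *
  \prod_(m <- undup (et_supp s ++ et_supp t)) mx_inner (et_fac s m) (et_fac t m).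

Definition Omega (n : nat) : etensor n :=
  @ETensor n 0 (fun _ => 1%:M) [::] (fun _ _ => erefl).

Lemma upd_suppP (n : nat) (t : etensor n) (k : int) (A : 'M[algC]_n) :
  forall m, m \notin k :: et_supp t ->
    (if m == k then A *m et_fac t m else et_fac t m) = 1%:M.
Proof.
move=> m; rewrite in_cons negb_or => /andP[/negbTE -> Hm].
exact: et_suppP.
Qed.

Definition Uop (n : nat) (i j : 'I_n) (t : etensor n) : etensor n :=
  @ETensor n (et_pos t + 1)
    (fun m => if m == et_pos t then delta_mx j i *m et_fac t m else et_fac t m)
    (et_pos t :: et_supp t) (@upd_suppP n t (et_pos t) (delta_mx j i)).

Definition Ustar (n : nat) (i j : 'I_n) (t : etensor n) : etensor n :=
  @ETensor n (et_pos t - 1)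
    (fun m => if m == et_pos t - 1 then delta_mx i j *m et_fac t m else et_fac t m)
    (et_pos t - 1 :: et_supp t) (@upd_suppP n t (et_pos t - 1) (delta_mx i j)).

(* A generator of U_n^nc: (false, i, j) is u_ij, (true, i, j) is u_ij^*. *)
Definition gen_act (n : nat) (x : bool * 'I_n * 'I_n) (t : etensor n) : etensor n :=
  let: (st, i, j) := x in if st then Ustar i j t else Uop i j t.

(* j(x_1 x_2 ... x_r) applied to a vector: x_r acts first *)
Definition word_act (n : nat) (w : seq (bool * 'I_n * 'I_n)) (t : etensor n) :=
  foldr (@gen_act n) t w.

Definition h_word (n : nat) (w : seq (bool * 'I_n * 'I_n)) : algC :=
  et_inner (Omega n) (word_act w (Omega n)).

(* Main.v *)
Require Import Defs.
From HB Require Import structures.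
From mathcomp Require Import all_boot all_order all_algebra all_field.
Import Order.TTheory GRing.Theory Num.Theory.
Local Open Scope ring_scope.

Lemma tr_delta n (a b : 'I_n) : \tr (delta_mx a b : 'M[algC]_n) = (a == b)%:R.
Proof.
rewrite /mxtrace (bigD1 a) //= mxE eqxx big1 ?addr0 => [|k /negbTE kn].
  by case: (a == b).
by rewrite mxE; case: eqP kn => // ->; rewrite eqxx.
Qed.

Lemma conj1 n : (map_mx Num.conj (1%:M : 'M[algC]_n))^T = 1%:M.
Proof. by rewrite map_mx1 trmx1. Qed.


Lemma pair1 {n} (a b c d : 'I_n) s (t : etensor n) :
  let T := word_act s t in
  let t' := word_act [:: (false, a, b), (true, c, d) & s] t in
  [/\ et_pos t' = et_pos T, et_pos T - 1 \in et_supp t' &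
    forall x, et_fac t' x = if x == et_pos T - 1 then
       delta_mx b a *m (delta_mx c d *m et_fac T x) else et_fac T x].
Proof.
rewrite /= subrK; split => //; first by rewrite !inE eqxx.
by move=> x; case: eqP.
Qed.

Lemma pair2 {n} (a b c d : 'I_n) s (t : etensor n) :
  let T := word_act s t in
  let t' := word_act [:: (true, a, b), (false, c, d) & s] t in
  [/\ et_pos t' = et_pos T, et_pos T \in et_supp t' &
    forall x, et_fac t' x = if x == et_pos T then
       delta_mx a b *m (delta_mx d c *m et_fac T x) else et_fac T x].
Proof.
rewrite /= addrK; split => //; first by rewrite !inE eqxx.
by move=> x; case: eqP.
Qed.

Definition C1 {n} (i j : nat -> 'I_n) m : algC :=
  \prod_(1 <= a < (m.+1).*2) (if odd a then (i a == i a.+1)%:R else (j a == j a.+1)%:R).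

Lemma C1S n (i j : nat -> 'I_n) m :
  C1 i j m.+1 = (i 1%N == i 2%N)%:R * ((j 2%N == j 3%N)%:R *
     C1 (fun k => i k.+2) (fun k => j k.+2) m).
Proof.
rewrite /C1 big_ltn // big_ltn //= -[3%N]/(1+2)%N big_addn.
have -> : ((m.+2).*2 - 2 = (m.+1).*2)%N by rewrite doubleS subSS.

congr (_ * (_ * _)); apply: eq_bigr => k _; rewrite addn2 /= negbK //.
Qed.

Lemma W1 {n} m (i j : nat -> 'I_n) t :
 let t' := word_act [seq (odd k, i k.+1, j k.+1) | k <- iota 0 (m.+1).*2] t in
 [/\ et_pos t' = et_pos t, et_pos t - 1 \in et_supp t' &
   forall x, et_fac t' x = if x == et_pos t - 1 then
     C1 i j m *: delta_mx (j 1%N) (j (m.+1).*2) *m et_fac t x else et_fac t x].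
Proof.
elim: m i j t => [|m IH] i j t.
  have [Q1 Q2 Q3] := pair1 (i 1%N) (j 1%N) (i 2%N) (j 2%N) [::] t.
  split => // x; rewrite Q3 /=; case: eqP => // _.
  rewrite /C1 big_nat1 /= mulmxA.
  have [->|ne] := eqVneq (i 1%N) (i 2%N).
    by rewrite mul_delta_mx scale1r.
  by rewrite mul_delta_mx_0 // scale0r !mul0mx.
set i' := fun k => i k.+2; set j' := fun k => j k.+2.
have -> : [seq (odd k, i k.+1, j k.+1) | k <- iota 0 (m.+2).*2] =
   [:: (false, i 1%N, j 1%N), (true, i 2%N, j 2%N) &
     [seq (odd k, i' k.+1, j' k.+1) | k <- iota 0 (m.+1).*2]].
  have -> : iota 0 (m.+2).*2 = [:: 0%N, 1%N & iota (2+0) (m.+1).*2] by [].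
  rewrite iotaDl map_cons map_cons -map_comp.
  by congr [:: _, _ & _]; apply: eq_map => k /=; rewrite negbK.
have [P1 P2 P3] := IH i' j' t.
have [Q1 Q2 Q3] := pair1 (i 1%N) (j 1%N) (i 2%N) (j 2%N)
   [seq (odd k, i' k.+1, j' k.+1) | k <- iota 0 (m.+1).*2] t.
rewrite P1 in Q1 Q2 Q3.
split => // x; rewrite Q3 P3; case: eqP => // _.
rewrite C1S -!scalemxAl !scalemxAr !mulmxA.
rewrite -!scalemxAr mulrA mulrC -scalerA; congr (_ *: _).
case: eqP => [<-|/eqP ne]; last first.
  by rewrite mul_delta_mx_0 // !mul0mx mul0r scale0r.
rewrite mul_delta_mx.
rewrite /j'; case: eqP => [<-|/eqP ne]; last first.
  by rewrite mul_delta_mx_0 // !mul0mx mulr0 scale0r.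
by rewrite mul_delta_mx mulr1 scale1r.
Qed.

Lemma W2 {n} m (i j : nat -> 'I_n) t :
 let t' := word_act [seq (~~ odd k, i k.+1, j k.+1) | k <- iota 0 (m.+1).*2] t in
 [/\ et_pos t' = et_pos t, et_pos t \in et_supp t' &
   forall x, et_fac t' x = if x == et_pos t then
     C1 j i m *: delta_mx (i 1%N) (i (m.+1).*2) *m et_fac t x else et_fac t x].
Proof.
elim: m i j t => [|m IH] i j t.
  have [Q1 Q2 Q3] := pair2 (i 1%N) (j 1%N) (i 2%N) (j 2%N) [::] t.
  split => // x; rewrite Q3 /=; case: eqP => // _.
  rewrite /C1 big_nat1 /= mulmxA.
  case: eqP => [<-|/eqP ne]; last first.
    by rewrite mul_delta_mx_0 // scale0r !mul0mx.
  by rewrite mul_delta_mx scale1r.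
set i' := fun k => i k.+2; set j' := fun k => j k.+2.
have -> : [seq (~~ odd k, i k.+1, j k.+1) | k <- iota 0 (m.+2).*2] =
   [:: (true, i 1%N, j 1%N), (false, i 2%N, j 2%N) &
     [seq (~~ odd k, i' k.+1, j' k.+1) | k <- iota 0 (m.+1).*2]].
  have -> : iota 0 (m.+2).*2 = [:: 0%N, 1%N & iota (2+0) (m.+1).*2] by [].
  rewrite iotaDl map_cons map_cons -map_comp.
  by congr [:: _, _ & _]; apply: eq_map => k /=; rewrite negbK.
have [P1 P2 P3] := IH i' j' t.
have [Q1 Q2 Q3] := pair2 (i 1%N) (j 1%N) (i 2%N) (j 2%N)
   [seq (~~ odd k, i' k.+1, j' k.+1) | k <- iota 0 (m.+1).*2] t.
rewrite P1 in Q1 Q2 Q3.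
split => // x; rewrite Q3 P3; case: eqP => // _.
rewrite C1S -!scalemxAl !scalemxAr !mulmxA.
rewrite -!scalemxAr mulrA mulrC -scalerA; congr (_ *: _).
case: eqP => [<-|/eqP ne]; last first.
  by rewrite mul_delta_mx_0 // !mul0mx mul0r scale0r.
rewrite mul_delta_mx.
rewrite /i'; case: eqP => [<-|/eqP ne]; last first.
  by rewrite mul_delta_mx_0 // !mul0mx mulr0 scale0r.
by rewrite mul_delta_mx mulr1 scale1r.
Qed.

Lemma fin {n} (t : etensor n) x (M : 'M[algC]_n) : (0 < n)%N -> et_pos t = 0 ->
  x \in et_supp t -> (forall y, et_fac t y = if y == x then M else 1%:M) ->
  et_inner (Omega n) t = mx_inner 1%:M M.
Proof.
move=> n0 tp xs tf; rewrite /et_inner tp eqxx mul1r /=.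
rewrite (bigD1_seq x) ?mem_undup ?undup_uniq //= tf eqxx big1 ?mulr1 //.
move=> y /negbTE yx; rewrite tf yx /mx_inner conj1 mul1mx mxtrace1 divff //.
by rewrite pnatr_eq0 -lt0n.
Qed.

Lemma inner_fin n (a b : 'I_n) (c : algC) :
  mx_inner 1%:M (c *: delta_mx a b *m 1%:M) = n%:R^-1 * c * (b == a)%:R.
Proof.
rewrite /mx_inner conj1 mul1mx mulmx1 mxtraceZ tr_delta eq_sym.
by rewrite mulrC mulrA.
Qed.

Theorem mainTheorem8 (n m : nat) (i j : nat -> 'I_n) :
  let r := (m.+1).*2 in
  h_word [seq (odd k, i k.+1, j k.+1) | k <- iota 0 r] =
    n%:R^-1 *
    (\prod_(1 <= a < r) (if odd a then (i a == i a.+1)%:R else (j a == j a.+1)%:R))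
    * (j r == j 1%N)%:R
  /\
  h_word [seq (~~ odd k, i k.+1, j k.+1) | k <- iota 0 r] =
    n%:R^-1 *
    (\prod_(1 <= a < r) (if odd a then (j a == j a.+1)%:R else (i a == i a.+1)%:R))
    * (i r == i 1%N)%:R.
Proof.
have n0 : (0 < n)%N by case: (i 0%N) => k kn; apply: leq_ltn_trans kn.
split; rewrite /h_word.
  have [P1 P2 P3] := W1 m i j (Omega n).
  by rewrite (@fin _ _ _ (C1 i j m *: delta_mx (j 1%N) (j (m.+1).*2) *m 1%:M) n0 P1 P2 P3) inner_fin.
have [P1 P2 P3] := W2 m i j (Omega n).
by rewrite (@fin _ _ _ (C1 j i m *: delta_mx (i 1%N) (i (m.+1).*2) *m 1%:M) n0 P1 P2 P3) inner_fin.
Qed.
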